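(* Let $n\ge 1$ and let $A\in\mathbb{C}^{2^n\times 2^n}$ be a matrix represented by a dictionary data structure with $s_0\ge 1$ data items, i.e. there are non-zero complex numbers $A_0,\dots,A_{s_0-1}$ (data values), sets $S_c(l)\subseteq[0,2^n-1]$ and injective maps $c_l:S_c(l)\to[0,2^n-1]$ ($l\in[0,s_0-1]$) such that the pairs $(c_l(j),j)$, $l\in[0,s_0-1]$, $j\in S_c(l)$, are pairwise distinct and $$A=\sum_{l=0}^{s_0-1}\sum_{j\in S_c(l)}A_l\,\ket{c_l(j)}\bra{j}.$$ Let $m=\lceil\log_2 s_0\rceil$. Consider registers idx ($m$ qubits), del ($1$ qubit) and a system register ($n$ qubits). Suppose $O_c$ is a unitary on idx$\otimes$del$\otimes$system such that for all $l\in[0,2^m-1]$, $j\in[0,2^n-1]$, $$O_c\ket{l}_{\rm idx}\ket{0}_{\rm del}\ket{j}=\begin{cases}\ket{l}_{\rm idx}\ket{0}_{\rm del}\ket{c_l(j)}, & \text{if } l\in[0,s_0-1]\text{ and } j\in S_c(l),\\ \ket{l}_{\rm idx}\ket{1}_{\rm del}\ket{j}, & \text{if } l\in[s_0,2^m-1]\text{ or } j\notin S_c(l),\end{cases}$$ and suppose $\mathrm{PREP},\mathrm{UNPREP}$ are unitaries on the $m$-qubit register idx with $$\mathrm{PREP}\ket{0}^{\otimes m}=\frac{1}{\sqrt{\sum_{l=0}^{s_0-1}|A_l|}}\sum_{l=0}^{s_0-1}\sqrt{A_l}\,\ket{l},\qquad \mathrm{UNPREP}^{\dagger}\ket{0}^{\otimes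 m}=\frac{1}{\sqrt{\sum_{l=0}^{s_0-1}|A_l|}}\sum_{l=0}^{s_0-1}\big(\sqrt{A_l}\big)^{*}\ket{l}.$$ Then $U_A=(\mathrm{UNPREP}\otimes I_{2^{n+1}})\,O_c\,(\mathrm{PREP}\otimes I_{2^{n+1}})$ is a block encoding of $A$ with subnormalization $\alpha=\sum_{l=0}^{s_0-1}|A_l|$, i.e. $$\big(\bra{0}^{\otimes m}_{\rm idx}\bra{0}_{\rm del}\otimes I_{2^n}\big)\,U_A\,\big(\ket{0}^{\otimes m}_{\rm idx}\ket{0}_{\rm del}\otimes I_{2^n}\big)=\frac{A}{\alpha}.$$
   Context: For a complex number $c=|c|e^{\imath\theta}$ (with $\theta$ its argument), the square root is defined as $\sqrt{c}=\sqrt{|c|}\,e^{\imath\theta/2}$; $(\cdot)^*$ denotes complex conjugation. $[a,b]=\{a,a+1,\dots,b\}$. $\ket{j}$ denotes the computational basis state encoding the binary representation of the integer $j$; $I_N$ is the $N\times N$ identity. *)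

(* Defs.v *)
From HB Require Import structures.
From mathcomp Require Import all_boot all_order all_algebra.
From mathcomp Require Import complex mxtens.
Set Implicit Arguments. Unset Strict Implicit. Unset Printing Implicit Defensive.
Import Order.TTheory GRing.Theory Num.Theory.
Local Open Scope ring_scope.

Definition ket {C : pzRingType} (d k : nat) : 'cV[C]_d :=
  \col_(i < d) (nat_of_ord i == k)%:R.

Definition adj {C : numClosedFieldType} {p q : nat} (U : 'M[C]_(p, q)) : 'M[C]_(q, p) :=
  (map_mx (fun x => x^*) U)^T.

Definition unitary {C : numClosedFieldType} {d : nat} (U : 'M[C]_d) : Prop :=
  adj U *m U = 1%:M /\ U *m adj U = 1%:M.

Lemma dim11 (k : nat) : (1 * 1 * k = k)%N.
Proof. by rewrite !mul1n. Qed.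

(* Main.v *)
Require Import Defs.
From HB Require Import structures.
From mathcomp Require Import all_boot all_order all_algebra.
From mathcomp Require Import complex mxtens.
Import Order.TTheory GRing.Theory Num.Theory.
Local Open Scope ring_scope.

Set Implicit Arguments. Unset Strict Implicit.

Section Helpers.
Variable C : numClosedFieldType.

Lemma tensmxDl {m n p q} (A B : 'M[C]_(m,n)) (D : 'M[C]_(p,q)) :
  (A + B) *t D = A *t D + B *t D.
Proof. by apply/matrixP=> i j; rewrite !mxE mulrDl. Qed.

Lemma tensmxZl {m n p q} (a : C) (A : 'M[C]_(m,n)) (D : 'M[C]_(p,q)) :
  (a *: A) *t D = a *: (A *t D).
Proof. by apply/matrixP=> i j; rewrite !mxE mulrA. Qed.

Lemma tensmx_suml {m n p q} (I : finType) (F : I -> 'M[C]_(m,n)) (D : 'M[C]_(p,q)) :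
  (\sum_i F i) *t D = \sum_i (F i *t D).
Proof.
apply/matrixP=> i j; rewrite !mxE summxE mulr_suml summxE.
by apply: eq_bigr => k _; rewrite !mxE.
Qed.

Lemma ket_tens a b (k l : nat) : (l < b)%N ->
  ket a k *t ket b l = ket (a * b) (k * b + l) :> 'M[C]_(a * b, 1 * 1).
Proof.
move=> lb; apply/matrixP=> i j.
case: (mxtens_indexP i)=> i1 i2; case: (mxtens_indexP j)=> j1 j2.
rewrite tensmxE !mxE /= -natrM mulnb eq_addl_mul //.
Qed.

Lemma mul_ket a b (X : 'M[C]_(a,b)) (j : 'I_b) : X *m ket b j = col j X.
Proof.
apply/matrixP=> r s; rewrite !mxE (bigD1 j) //= big1 ?addr0.
  by rewrite mxE eqxx mulr1.
by move=> k kj; rewrite mxE; have/negbTE-> : (k:nat) != j by []; rewrite mulr0.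
Qed.

Lemma ket_mul a b (X : 'M[C]_(a,b)) (i : 'I_a) : (ket a i)^T *m X = row i X.
Proof.
apply/matrixP=> r s; rewrite !mxE (bigD1 i) //= big1 ?addr0.
  by rewrite !mxE eqxx mul1r.
by move=> k kj; rewrite !mxE; have/negbTE-> : (k:nat) != i by []; rewrite mul0r.
Qed.

Lemma ket_out a k : (a <= k)%N -> ket a k = 0 :> 'cV[C]_a.
Proof.
move=> h; apply/matrixP=> i j; rewrite !mxE.
by case: eqP => // e; move: (ltn_ord i); rewrite e ltnNge h.
Qed.

Lemma adj_mul {a b c} (X : 'M[C]_(a,b)) (Y : 'M[C]_(b,c)) :
  adj (X *m Y) = adj Y *m adj X.
Proof. by rewrite /adj map_mxM trmx_mul. Qed.

Lemma adj_tens {a b c d} (X : 'M[C]_(a,b)) (Y : 'M[C]_(c,d)) :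
  adj (X *t Y) = adj X *t adj Y.
Proof. by rewrite /adj map_mxT trmx_tens. Qed.

Lemma adj_ket a k : adj (ket a k) = (ket a k)^T :> 'M[C]_(1, a).
Proof. by apply/matrixP=> i j; rewrite !mxE rmorph_nat. Qed.

Lemma tens11 (X Y : 'M[C]_1) :
  (X *t Y) (ord0 : 'I_1) (ord0 : 'I_1) = X 0 0 * Y 0 0.
Proof.
have -> : (ord0 : 'I_1) = mxtens_index (ord0 : 'I_1, ord0 : 'I_1) :> 'I_(1*1) by apply: val_inj.
by rewrite tensmxE.
Qed.

Lemma entry_ket a b (X : 'M[C]_(a,b)) (i : 'I_a) (j : 'I_b) :
  X i j = ((ket a i)^T *m X *m ket b j) 0 0.
Proof. by rewrite mul_ket ket_mul !mxE. Qed.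

Lemma ket10 : ket 1 0 = 1%:M :> 'M[C]_1.
Proof. by apply/matrixP=> i j; rewrite !mxE !ord1. Qed.

Lemma entry_ket' a b (X : 'M[C]_(a,b)) (i j : nat) (hi : (i < a)%N) (hj : (j < b)%N) :
  ((ket a i)^T *m X *m ket b j) 0 0 = X (Ordinal hi) (Ordinal hj).
Proof. by rewrite (entry_ket X (Ordinal hi) (Ordinal hj)). Qed.

Lemma ket_ket a (i k : nat) (hi : (i < a)%N) :
  ((ket a i)^T *m ket a k) 0 0 = (i == k)%:R :> C.
Proof. by rewrite (ket_mul _ (Ordinal hi)) !mxE. Qed.

Lemma adj3 a b d (x : 'cV[C]_a) (y : 'cV[C]_b) (z : 'cV[C]_d) :
  adj (x *t y *t z : 'cV_(a * b * d)) = (adj x *t adj y *t adj z : 'rV_(a * b * d)).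
Proof. by apply/matrixP=> i j; rewrite /adj !mxE !rmorphM. Qed.

Lemma mul3c a a' b b' d d' (A : 'M[C]_(a,a')) (B : 'M[C]_(b,b')) (D : 'M[C]_(d,d'))
  (x : 'cV[C]_a') (y : 'cV[C]_b') (z : 'cV[C]_d') :
  (A *t B *t D) *m (x *t y *t z : 'cV_(a' * b' * d')) =
  ((A *m x) *t (B *m y) *t (D *m z) : 'cV_(a * b * d)).
Proof. have h := tensmx_mul (A *t B) D (x *t y) z; rewrite (tensmx_mul A B x y) in h; exact h. Qed.

Lemma mul3r a a' b b' d d' (A : 'M[C]_(a,a')) (B : 'M[C]_(b,b')) (D : 'M[C]_(d,d'))
  (x : 'rV[C]_a) (y : 'rV[C]_b) (z : 'rV[C]_d) :
  (x *t y *t z : 'rV_(a * b * d)) *m (A *t B *t D) =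
  ((x *m A) *t (y *m B) *t (z *m D) : 'rV_(a' * b' * d')).
Proof. have h := tensmx_mul (x *t y) z (A *t B) D; rewrite (tensmx_mul x y A B) in h; exact h. Qed.

Lemma mul3rc a b d (x : 'rV[C]_a) (y : 'rV[C]_b) (z : 'rV[C]_d)
  (u : 'cV[C]_a) (v : 'cV[C]_b) (w : 'cV[C]_d) :
  (x *t y *t z : 'rV_(a * b * d)) *m (u *t v *t w : 'cV_(a * b * d)) =
  ((x *m u) *t (y *m v) *t (z *m w) : 'M_1).
Proof. have h := tensmx_mul (x *t y) z (u *t v) w; rewrite (tensmx_mul x y u v) in h; exact h. Qed.

Lemma e3 (x y z : 'M[C]_1) : (x *t y *t z : 'M_1) 0 0 = x 0 0 * y 0 0 * z 0 0.
Proof. by rewrite tens11 tens11. Qed.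

End Helpers.

Local Open Scope complex_scope.

Lemma cc (R : rcfType) (x : R[i]) : x^* = x^*%R.
Proof. by []. Qed.

Theorem theorem1 (R : rcfType) (n s0 : nat) (hn : (1 <= n)%N) (hs0 : (1 <= s0)%N)
  (A : 'M[R[i]]_(2 ^ n))
  (Aval : 'I_s0 -> R[i]) (Sc : 'I_s0 -> {set 'I_(2 ^ n)})
  (c : 'I_s0 -> 'I_(2 ^ n) -> 'I_(2 ^ n))
  (Oc : 'M[R[i]]_(2 ^ up_log 2 s0 * 2 * 2 ^ n))
  (PREP UNPREP : 'M[R[i]]_(2 ^ up_log 2 s0)) :
  let m := up_log 2 s0 in
  let ket3 (l d j : nat) : 'cV[R[i]]_(2 ^ m * 2 * 2 ^ n) :=
    ket (2 ^ m) l *t ket 2 d *t ket (2 ^ n) j in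
  let alpha := \sum_(l < s0) `|Aval l| in
  (forall l, Aval l != 0) ->
  (forall l, {in Sc l &, injective (c l)}) ->
  (forall (l l' : 'I_s0) (j j' : 'I_(2 ^ n)), j \in Sc l -> j' \in Sc l' ->
      (c l j, j) = (c l' j', j') -> (l, j) = (l', j')) ->
  A = \sum_(l < s0) \sum_(j in Sc l) Aval l *: delta_mx (c l j) j ->
  unitary Oc ->
  (forall (l : 'I_s0) (j : 'I_(2 ^ n)), j \in Sc l ->
      Oc *m ket3 l 0 j = ket3 l 0 (c l j)) ->
  (forall (l : nat) (j : 'I_(2 ^ n)), (l < 2 ^ m)%N ->
      ((s0 <= l)%N \/ exists l' : 'I_s0, nat_of_ord l' = l /\ j \notin Sc l') ->
      Oc *m ket3 l 0 j = ket3 l 1 j) ->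
  unitary PREP -> unitary UNPREP ->
  PREP *m ket (2 ^ m) 0 =
    (sqrtC alpha)^-1 *: \sum_(l < s0) sqrtC (Aval l) *: ket (2 ^ m) l ->
  adj UNPREP *m ket (2 ^ m) 0 =
    (sqrtC alpha)^-1 *: \sum_(l < s0) (sqrtC (Aval l))^* *: ket (2 ^ m) l ->
  let UA := (UNPREP *t 1%:M *t 1%:M) *m Oc *m (PREP *t 1%:M *t 1%:M)
            : 'M[R[i]]_(2 ^ m * 2 * 2 ^ n) in
  let P : 'M[R[i]]_(2 ^ m * 2 * 2 ^ n, 1 * 1 * 2 ^ n) :=
    ket (2 ^ m) 0 *t ket 2 0 *t 1%:M in
  castmx (dim11 (2 ^ n), dim11 (2 ^ n)) (adj P *m UA *m P) = alpha^-1 *: A.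
Proof.
move=> m ket3 alpha HA0 Hinj Hdist HA HOc HOc0 HOc1 HP HU hPREP hUN UA P.
subst ket3 UA P m.
cbv beta in HOc0, HOc1.
have hsm : (s0 <= 2 ^ up_log 2 s0)%N := up_logP s0 (isT : (1 < 2)%N).
have hM0 : (0 < 2 ^ up_log 2 s0)%N by rewrite expn_gt0.
set s := sqrtC alpha.
have kt : forall k : 'I_(2 ^ n),
  ket (1 * 1 * 2 ^ n)%N k = (ket 1 0 *t ket 1 0) *t ket (2 ^ n) k :> 'M[R[i]]_(1 * 1 * 2 ^ n, 1 * 1 * 1).
  by move=> k; rewrite ket_tens // ket_tens //= mul0n add0n.
have PK : forall k : 'I_(2 ^ n),
  (ket (2 ^ up_log 2 s0) 0 *t ket 2 0 *t 1%:M) *m ket (1 * 1 * 2 ^ n)%N k =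
  ket (2 ^ up_log 2 s0) 0 *t ket 2 0 *t ket (2 ^ n) k :> 'M[R[i]]_(_, _).
  by move=> k; rewrite kt mul3c ket10 !mulmx1 mul1mx.
apply/matrixP => i j.
rewrite castmxE [RHS]mxE [LHS]entry_ket -!mulmxA.
rewrite (_ : nat_of_ord (cast_ord _ i) = i) // (_ : nat_of_ord (cast_ord _ j) = j) //.
rewrite PK !mulmxA -adj_ket -adj_mul PK.
set M := (2 ^ up_log 2 s0)%N.
set N := (2 ^ n)%N.
have hv : (PREP *t 1%:M *t 1%:M) *m (ket M 0 *t ket 2 0 *t ket N j : 'cV_(M * 2 * N)) =
   \sum_(l < s0) (s^-1 * sqrtC (Aval l)) *: (ket M l *t ket 2 0 *t ket N j : 'cV_(M * 2 * N)).
  rewrite mul3c !mul1mx hPREP !tensmxZl !tensmx_suml scaler_sumr.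
  by apply: eq_bigr => l _; rewrite !tensmxZl scalerA.
have hw : adj (ket M 0 *t ket 2 0 *t ket N i : 'cV_(M * 2 * N)) *m (UNPREP *t 1%:M *t 1%:M) =
   ((adj (ket M 0) *m UNPREP) *t adj (ket 2 0) *t adj (ket N i) : 'rV_(M * 2 * N)).
  by rewrite adj3 mul3r !mulmx1.
have hl : forall l : 'I_s0, (l < M)%N by move=> l; exact: leq_trans (ltn_ord l) hsm.
have hUl : forall l : 'I_s0, UNPREP (Ordinal hM0) (Ordinal (hl l)) = s^-1 * sqrtC (Aval l).
  move=> l; have := congr1 (fun X : 'M[R[i]]_(M, 1) => X (Ordinal (hl l)) ord0) hUN.
  rewrite /= (mul_ket _ (Ordinal hM0)) !mxE summxE (bigD1 l) //= big1; last first.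
    move=> l' hl'; rewrite !mxE /=.
    have/negbTE-> : (l:nat) != l' by rewrite eq_sym; exact hl'.
    by rewrite mulr0.
  rewrite !mxE /= eqxx mulr1 addr0 => h.
  apply: (can_inj (@conjCK _)); rewrite h rmorphM; congr (_ * _).
  symmetry; apply: geC0_conj.
  by rewrite invr_ge0 sqrtC_ge0 sumr_ge0 // => l' _; exact: normr_ge0.
rewrite -mulmxA hv mulmx_sumr summxE.
have hss : s^-1 * s^-1 = alpha^-1 by rewrite -invfM -expr2 sqrtCK.
rewrite HA summxE mulr_sumr; apply: eq_bigr => l _.
rewrite -scalemxAr mxE -(mulmxA _ Oc) hw summxE.
have hi0 : (0 < 2)%N by [].
case: (boolP (j \in Sc l)) => hj.
  rewrite HOc0 // mul3rc e3 !adj_ket (entry_ket' _ hM0 (hl l)) hUl.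
  rewrite (ket_ket _ _ hi0) (ket_ket _ _ (ltn_ord i)).
  rewrite (bigD1 j) //= big1 => [|j' /andP [_ hj']]; last first.
    rewrite !mxE; have/negbTE-> : j != j' by rewrite eq_sym.
    by rewrite andbF mulr0.
  rewrite !mxE eqxx andbT addr0.
  rewrite mulr1 -hss -{3}(sqrtCK (Aval l)) expr2.
  by rewrite !mulrA; congr (_ * _); rewrite -!mulrA; congr (_ * _); rewrite mulrCA.
rewrite (HOc1 l j (hl l)); last by right; exists l.
rewrite mul3rc e3 !adj_ket (ket_ket _ _ hi0) /= mulr0 mul0r mulr0 big1 ?mulr0 // => j' hj'.
rewrite !mxE; have/negbTE-> : j != j'.
  by apply/eqP => e; move: hj; rewrite e hj'.
by rewrite andbF mulr0.
Qed.
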